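(* A packed word $w$ is $212$-avoiding if and only if there is a generalized Stirling permutation $u$ with $\mathbf w(u)=w$.
   Context: A word $w=w_1\cdots w_n$ of positive integers is a packed word if its set of letters is $\{1,\dots,m\}$ for some $m\ge0$. It is $212$-avoiding if whenever $i<j<k$ and $w_i=w_k$ we have $w_j\ge w_i$. A planar tree is a rooted tree in which the children of each node are linearly ordered and every node is a leaf or has at least two children (an internal node). A generalized Stirling permutation of degree $n$ is a planar tree with $n+1$ leaves together with a bijection $\kappa$ from its set of internal nodes to $\{1,\dots,N\}$ ($N$ = number of internal nodes) such that the label of each internal node is smaller than the labels of its internal children. Its word $\mathbf w(u)$ is defined recursively: a leaf has empty word; a node $x$ with children $c_1,\dots,c_k$ (left to right) has word $\mathbf w(c_1)\,\kappa(x)\,\mathbf w(c_2)\,\kappa(x)\cdots\kappa(x)\,\mathbf w(c_k)$ (i.e. the label of $x$ is written in each of the $k-1$ gaps between its children), and $\mathbf w(u)$ is the word of the root. *)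

(* Defs.v *)
From mathcomp Require Import all_boot.
Set Implicit Arguments. Unset Strict Implicit. Unset Printing Implicit Defensive.

Definition packed (w : seq nat) : Prop :=
  exists m : nat, forall x : nat, (x \in w) = (x \in iota 1 m).

Definition avoids212 (w : seq nat) : Prop :=
  forall i j k : nat, i < j -> j < k -> k < size w ->
    nth 0 w i = nth 0 w k -> nth 0 w i <= nth 0 w j.

Inductive ltree : Type :=
  | LLeaf : ltree
  | LNode : nat -> seq ltree -> ltree.

Fixpoint labels (t : ltree) : seq nat :=
  match t with
  | LLeaf => [::]
  | LNode k cs => k :: flatten (map labels cs)
  end.

Fixpoint wf_increasing (t : ltree) : bool :=
  match t with
  | LLeaf => true
  | LNode k cs =>
      [&& 1 < size cs,
          all (fun c => match c with LLeaf => true | LNode j _ => k < j end) cs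
        & all wf_increasing cs]
  end.

(* A generalized Stirling permutation: a planar tree (every node is a leaf or
   has >= 2 children) with a bijection kappa from internal nodes to
   {1,...,N} (N = number of internal nodes), increasing along edges. *)
Definition gen_stirling (t : ltree) : Prop :=
  wf_increasing t /\ perm_eq (labels t) (iota 1 (size (labels t))).

Fixpoint join_with (k : nat) (ws : seq (seq nat)) : seq nat :=
  match ws with
  | [::] => [::]
  | [:: w] => w
  | w :: ws' => w ++ k :: join_with k ws'
  end.

Fixpoint tword (t : ltree) : seq nat :=
  match t with
  | LLeaf => [::]
  | LNode k cs => join_with k (map tword cs)
  end.

(* Main.v *)
Require Import Defs.
From mathcomp Require Import all_boot zify.
Set Implicit Arguments. Unset Strict Implicit. Unset Printing Implicit Defensive.

Definition avoid (w : seq nat) := forall a b, b < a -> ~~ subseq [:: a; b; a] w.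

Lemma subseq_consP (y : nat) (s w : seq nat) : subseq (y :: s) w <->
  exists i, [/\ i < size w, nth 0 w i = y & subseq s (drop i.+1 w)].
Proof.
split.
- elim: w => [|x w IH] //=.
  case: eqP => [<-|_] H; first by exists 0; split => //=; rewrite drop0.
  by case: (IH H) => i [H1 H2 H3]; exists i.+1; split.
- case=> i [Hi Hn Hs].
  rewrite -(cat_take_drop i w) (drop_nth 0 Hi) Hn -[y :: s]cat0s.
  by apply: cat_subseq; [exact: sub0seq | rewrite /= eqxx].
Qed.

Lemma avoidP w : avoids212 w <-> avoid w.
Proof.
split.
- move=> H a b ba; apply/negP => /subseq_consP [i [Hi Hni /subseq_consP [j [Hj Hnj /subseq_consP [k [Hk Hnk _]]]]]].
  move: Hj Hk Hnj Hnk; rewrite size_drop nth_drop drop_drop size_drop nth_drop => Hj Hk Hnj Hnk.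
  have := H i (i.+1 + j) (j.+1 + i.+1 + k).
  rewrite Hni Hnj Hnk => /(_ _ _ _ erefl) Hab.
  have: a <= b by apply: Hab; lia.
  by rewrite leqNgt ba.
- move=> H i j k ij jk kw E; rewrite leqNgt; apply/negP => ba.
  apply: (negP (H _ _ ba)).
  apply/subseq_consP; exists i; split; [lia | done |].
  apply/subseq_consP; exists (j - i.+1); rewrite size_drop nth_drop; split; [lia| by rewrite subnKC |].
  rewrite drop_drop sub1seq; have -> : (j - i.+1).+1 + i.+1 = j.+1 by lia.
  apply/(nthP 0); exists (k - j.+1); rewrite ?size_drop ?nth_drop; first exact: (ltn_sub2r (leq_ltn_trans jk kw) kw).
  by rewrite E subnKC.
Qed.

Lemma subseq_catP (s u v : seq nat) : subseq s (u ++ v) ->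
  exists s1 s2, [/\ s = s1 ++ s2, subseq s1 u & subseq s2 v].
Proof.
case/subseqP => m Hm ->.
exists (mask (take (size u) m) u), (mask (drop (size u) m) v).
rewrite -mask_cat ?cat_take_drop; first by split => //; apply: mask_subseq.
by rewrite size_takel // Hm size_cat leq_addr.
Qed.

Lemma avoid_cat (u v : seq nat) : avoid u -> avoid v ->
  (forall x, x \in u -> x \notin v) -> avoid (u ++ v).
Proof.
move=> Hu Hv D a b ba; apply/negP => /subseq_catP [s1 [s2 [E S1 S2]]].
case: s1 E S1 => [|x1 [|x2 [|x3 [|x4 s1]]]] /= E S1.
- by rewrite -E in S2; case/negP: (Hv _ _ ba).
- case: E => Ex E2; subst x1 s2.
  have av : a \in v by apply: (mem_subseq S2); rewrite !inE eqxx orbT.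
  have au : a \in u by rewrite -sub1seq.
  by move/negP: (D a au).
- case: E => Ex Ey E2; subst x1 x2 s2.
  have av : a \in v by rewrite -sub1seq.
  have au : a \in u by apply: (mem_subseq S1); rewrite !inE eqxx.
  by move/negP: (D a au).
- case: E => Ex Ey Ez E2; subst x1 x2 x3 s2.
  by case/negP: (Hu _ _ ba).
- by case: E => _ _ _ /(f_equal size).
Qed.

Lemma avoid_consk k (v : seq nat) : avoid v -> all (fun x => k <= x) v -> avoid (k :: v).
Proof.
move=> Hv Hk a b ba /=; case: eqP => [Eak|_]; last exact: Hv.
apply/negP => /= S. have : b \in v by rewrite -sub1seq; apply: subseq_trans S; rewrite sub1seq mem_head.
move/(allP Hk); rewrite -Eak leqNgt ba //.
Qed.

Fixpoint inT (c : ltree) (cs : seq ltree) : Prop :=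
  match cs with [::] => False | d :: cs' => d = c \/ inT c cs' end.

Definition ltree_ind2 (P : ltree -> Prop) (HL : P LLeaf)
  (HN : forall k cs, (forall c, inT c cs -> P c) -> P (LNode k cs)) : forall t, P t :=
  fix F t := match t with
  | LLeaf => HL
  | LNode k cs => HN k cs
      ((fix G (cs : seq ltree) : forall c, inT c cs -> P c :=
          match cs return forall c, inT c cs -> P c with
          | [::] => fun c H => False_ind _ H
          | d :: cs' => fun c H => match H with
                       | or_introl E => eq_ind d P (F d) c E
                       | or_intror H' => G cs' c H' end
          end) cs)
  end.

Definition root (t : ltree) := if t is LNode k _ then k else 0.

Lemma allT (p : pred ltree) cs c : all p cs -> inT c cs -> p c.
Proof. by elim: cs => //= d cs IH /andP [pd pc] [<-|/IH]; auto. Qed.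

Lemma mem_flatT (f : ltree -> seq nat) cs x : x \in flatten (map f cs) ->
  exists c, inT c cs /\ x \in f c.
Proof.
elim: cs => //= d cs IH; rewrite mem_cat => /orP [H|/IH [c [H1 H2]]].
  by exists d; split; [left|].
by exists c; split; [right|].
Qed.

Lemma flatT_mem (f : ltree -> seq nat) cs x c : inT c cs -> x \in f c ->
  x \in flatten (map f cs).
Proof. elim: cs => //= d cs IH [<-|H] Hx; rewrite mem_cat; first by rewrite Hx. by rewrite IH // orbT. Qed.

Lemma uniq_flatT (f : ltree -> seq nat) cs c : uniq (flatten (map f cs)) -> inT c cs -> uniq (f c).
Proof.
elim: cs => //= d cs IH; rewrite cat_uniq => /and3P [U1 _ U2] [<-|]; auto.
Qed.

Lemma labels_ge t : wf_increasing t -> forall x, x \in labels t -> root t <= x.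
Proof.
elim/ltree_ind2: t => // k cs IH /= /and3P [_ Hch Hwf] x.
rewrite inE => /orP [/eqP -> //|/mem_flatT [c [Hc Hx]]].
have := allT Hch Hc; case: c Hc Hx => // j cs' Hc Hx kj.
have := IH _ Hc (allT Hwf Hc) _ Hx => /= jx. exact: ltnW (leq_trans kj jx).
Qed.

Lemma join_avoid k cs :
  (forall c, inT c cs -> avoid (tword c) /\ {subset tword c <= labels c}) ->
  uniq (flatten (map labels cs)) -> (forall x, x \in flatten (map labels cs) -> k < x) ->
  avoid (join_with k (map tword cs)) /\
  {subset join_with k (map tword cs) <= k :: flatten (map labels cs)}.
Proof.
elim: cs => [|c cs IH] H U G.
  by split => //= a b _.
case: cs IH H U G => [|c' cs] IH H U G.
  have [A S] := H c (or_introl erefl).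
  by split => //= x /S; rewrite inE cats0 => ->; rewrite orbT.
have [A S] := H c (or_introl erefl).
move: U; rewrite [flatten _]/= cat_uniq => /and3P [Uc Dis U'].
have G' : forall x, x \in flatten (map labels (c' :: cs)) -> k < x.
  by move=> x Hx; apply: G; rewrite [flatten _]/= mem_cat Hx orbT.
have [A' S'] := IH (fun d Hd => H d (or_intror Hd)) U' G'.
set J := join_with k (map tword (c' :: cs)) in A' S'.
have -> : join_with k (map tword [:: c, c' & cs]) = tword c ++ k :: J by [].
split.
- apply: avoid_cat => //.
  + apply: avoid_consk => //; apply/allP => x /S'; rewrite inE => /orP [/eqP -> //|/G'].
    exact: ltnW.
  + move=> x /S Hx; rewrite inE negb_or; apply/andP; split.
      have : k < x by apply: G; rewrite [flatten _]/= mem_cat Hx.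
      by rewrite ltn_neqAle eq_sym => /andP [].
    apply/negP => /S'; rewrite inE => /orP [/eqP Ek|Hf].
      have : k < x by apply: G; rewrite [flatten _]/= mem_cat Hx.
      by rewrite Ek ltnn.
    by move/hasPn: Dis => /(_ x Hf) /=; rewrite Hx.
- move=> x; rewrite mem_cat inE => /orP [/S Hx|/orP [Ek|/S']].
  + by rewrite inE [flatten _]/= mem_cat Hx orbT.
  + by rewrite inE Ek.
  + rewrite !inE => /orP [->|Hf] //; by rewrite [flatten _]/= mem_cat Hf !orbT.
Qed.

Lemma tree_avoid t : wf_increasing t -> uniq (labels t) ->
  avoid (tword t) /\ {subset tword t <= labels t}.
Proof.
elim/ltree_ind2: t => [|k cs IH]; first by split => //= a b _.
move=> Hwf0; have := Hwf0; move=> /= /and3P [_ Hch Hwf] /andP [kF uF].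
apply: join_avoid => //.
- move=> c Hc; apply: IH => //; [exact: allT Hwf Hc | exact: uniq_flatT uF Hc].
- move=> x Hx; have := labels_ge Hwf0 (x:=x); rewrite /= inE Hx orbT => /(_ erefl) kx.
  rewrite ltn_neqAle kx andbT; apply/negP => /eqP E; subst x; by rewrite Hx in kF.
Qed.

Lemma join_cons m (x : nat) t ws : join_with m ((x :: t) :: ws) = x :: join_with m (t :: ws).
Proof. by case: ws. Qed.

Lemma split_exists m (w : seq nat) : exists ws : seq (seq nat),
  [/\ join_with m ws = w, all (fun s => m \notin s) ws & ws != [::]].
Proof.
elim: w => [|x s [ws [J A N]]]; first by exists [:: [::]].
case: (eqVneq x m) => [->|xm].
  exists ([::] :: ws); split => //=.
  by case: ws J {A} N => // t ws' <-.
case: ws J A N => // t ws' J /= /andP [mt A] _.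
exists ((x :: t) :: ws'); split => //; first by rewrite join_cons J.
by rewrite /= inE negb_or eq_sym xm mt A.
Qed.

Lemma mem_join2 m (a : seq nat) ws x : x \in join_with m (a :: ws) =
  (x \in a) || ((ws != [::]) && ((x == m) || (x \in flatten ws))).
Proof.
elim: ws a => [|b ws IH] a /=; first by rewrite orbF.
rewrite mem_cat inE IH mem_cat.
case: ws {IH} => [|c ws] /=; first by rewrite !orbF.
by case: (x \in a); case: (x == m).
Qed.

Lemma mem_join m (ws : seq (seq nat)) x : 1 < size ws ->
  (x \in join_with m ws) = (x == m) || (x \in flatten ws).
Proof.
case: ws => [|a [|b ws]] //= _; rewrite mem_cat inE mem_join2 mem_cat mem_cat.
by case: ws => [|c ws] /=; rewrite ?orbF; case: (x \in a); case: (x == m).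
Qed.

Lemma flat_join m (ws : seq (seq nat)) x : x \in flatten ws -> x \in join_with m ws.
Proof.
case: ws => [|a ws] //; rewrite mem_join2 /= mem_cat.
case: ws => [|b ws] /=; first by rewrite orbF.
by case/orP => ->; rewrite ?orbT.
Qed.

Lemma subseq_join m (ws : seq (seq nat)) s : s \in ws -> subseq s (join_with m ws).
Proof.
elim: ws => //= a ws IH; rewrite inE => /orP [/eqP ->|H].
  by case: ws {IH} => [|b ws] //=; apply: prefix_subseq.
case: ws IH H => [|b ws] // IH H.
apply: subseq_trans (IH H) _.
exact: subseq_trans (subseq_cons _ m) (suffix_subseq a _).
Qed.

Lemma avoid_sub (u v : seq nat) : subseq u v -> avoid v -> avoid u.
Proof.
move=> S Hv a b ba; apply/negP => S'; case/negP: (Hv _ _ ba); exact: subseq_trans S' S.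
Qed.

Fixpoint disj (ws : seq (seq nat)) : Prop :=
  match ws with [::] => True | s :: ws' => (forall x, x \in s -> x \notin flatten ws') /\ disj ws' end.

Lemma disj_avoid m (ws : seq (seq nat)) : avoid (join_with m ws) ->
  (forall x, x \in flatten ws -> m < x) -> disj ws.
Proof.
elim: ws => //= a ws IH; case: ws IH => [|b ws] IH Hav Hg; first by split.
split.
- move=> x xa; apply/negP => xf.
  have mx : m < x by apply: Hg; rewrite mem_cat xa.
  case/negP: (Hav _ _ mx).
  rewrite -[[:: x; m; x]]/([:: x] ++ [:: m; x]); apply: cat_subseq; first by rewrite sub1seq.
  by rewrite /= eqxx sub1seq; exact: (flat_join m xf).
- have H1 : avoid (join_with m (b :: ws)).
    apply: avoid_sub Hav.
    exact: subseq_trans (subseq_cons _ m) (suffix_subseq a _).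
  have H2 : forall x : nat, x \in flatten (b :: ws) -> m < x.
    by move=> x Hx; apply: Hg; rewrite mem_cat Hx orbT.
  exact: IH H1 H2.
Qed.

Lemma min_exists (w : seq nat) : w != [::] -> exists m, m \in w /\ all (fun y => m <= y) w.
Proof.
elim: w => // x s IH _; case: s IH => [|y s] IH.
  by exists x; split; [exact: mem_head | rewrite /= leqnn].
have [m' [Hm' A]] := IH erefl.
case: (leqP x m') => xm.
  exists x; split; first exact: mem_head.
  apply/allP => z; rewrite inE => /orP [/eqP -> //|/(allP A)]; exact: leq_trans.
exists m'; split; first by rewrite inE Hm' orbT.
apply/allP => z; rewrite inE => /orP [/eqP -> |/(allP A) //]; exact: ltnW.
Qed.

Definition good t := [/\ wf_increasing t, uniq (labels t) & labels t =i tword t].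

Lemma choose_children (ws : seq (seq nat)) :
  (forall s, s \in ws -> exists t, good t /\ tword t = s) ->
  exists cs, map tword cs = ws /\ forall c, inT c cs -> good c.
Proof.
elim: ws => [|s ws IH] H; first by exists [::].
have [t [Gt Tt]] := H s (mem_head _ _).
have [cs [M G]] := IH (fun s' Hs' => H s' (@mem_behead _ (s :: ws) _ Hs')).
by exists (t :: cs); split; [rewrite /= Tt M | move=> c [<-|/G]].
Qed.

Lemma allT_intro (p : pred ltree) cs : (forall c, inT c cs -> p c) -> all p cs.
Proof. by elim: cs => //= d cs IH H; rewrite H ?IH //; [move=> c Hc; apply: H; right | left]. Qed.

Lemma inT_map (T : eqType) (f : ltree -> T) c cs : inT c cs -> f c \in map f cs.
Proof. by elim: cs => //= d cs IH [<-|/IH H]; rewrite inE ?eqxx ?H ?orbT. Qed.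

Lemma flat_labels cs : (forall c, inT c cs -> labels c =i tword c) ->
  flatten (map labels cs) =i flatten (map tword cs).
Proof.
elim: cs => //= c cs IH H x; rewrite !mem_cat (H c (or_introl erefl)) IH //.
by move=> d Hd; apply: H; right.
Qed.

Lemma uniq_flat cs : (forall c, inT c cs -> good c) -> disj (map tword cs) ->
  uniq (flatten (map labels cs)).
Proof.
elim: cs => //= c cs IH H [D1 D2]; rewrite cat_uniq.
have [_ Uc Lc] := H c (or_introl erefl).
rewrite Uc IH //; last by move=> d Hd; apply: H; right.
rewrite andbT; apply/hasPn => x; rewrite flat_labels; last first.
  by move=> d Hd; have [] := H d (or_intror Hd).
by move=> Hx; apply/negP; rewrite Lc => /D1; rewrite Hx.
Qed.

Lemma build n (w : seq nat) : size w <= n -> avoid w -> exists t, good t /\ tword t = w.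
Proof.
elim: n w => [|n IH] w Hs Hav.
  by case: w Hs Hav => // _ _; exists LLeaf.
case: (eqVneq w [::]) => [->|wn]; first by exists LLeaf.
have [m [mw mA]] := min_exists wn.
have [ws [J A N]] := split_exists m w.
have Sub : forall s, s \in ws -> subseq s w by move=> s Hs0; rewrite -J; apply: subseq_join.
have Hch : forall s, s \in ws -> exists t, good t /\ tword t = s.
  move=> s Hs0; apply: IH; last exact: avoid_sub (Sub s Hs0) Hav.
  have [le eqv] := size_subseq_leqif (Sub s Hs0).
  have : size s < size w.
    rewrite ltn_neqAle le andbT eqv; apply/negP => /eqP E.
    by move/allP: A => /(_ s Hs0); rewrite E mw.
  move=> H; exact: leq_trans H Hs.
have [cs [M G]] := choose_children Hch.
have size2 : 1 < size ws.
  case: ws J A N {Sub Hch M} => [|a [|b ws]] //= J /andP [ma _] _.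
  by rewrite J mw in ma.
have Hgt : forall x, x \in flatten ws -> m < x.
  move=> x Hx; have xw : x \in w by rewrite -J; apply: flat_join.
  rewrite ltn_neqAle (allP mA x xw) andbT; apply/negP => /eqP E; subst x.
  by case/flattenP: Hx => s Hs0 Hm; move/allP: A => /(_ s Hs0); rewrite Hm.
have LT : forall c, inT c cs -> labels c =i tword c by move=> c /G [].
have FL : flatten (map labels cs) =i flatten ws by rewrite -M; apply: flat_labels.
exists (LNode m cs); split; last by rewrite /= M.
split.
- rewrite /= -(size_map tword) M size2 /=; apply/andP; split.
  + apply: allT_intro => c Hc; case: c Hc => // j cs' Hc.
    apply: Hgt; rewrite -FL; apply: (flatT_mem (c := LNode j cs')) => //.
    by rewrite /= mem_head.
  + by apply: allT_intro => c /G [].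
- rewrite /= uniq_flat // ?M; last by apply: disj_avoid Hgt; rewrite J.
  rewrite andbT FL; apply/negP => /Hgt; by rewrite ltnn.
- move=> x; rewrite /= M mem_join // inE FL //.
Qed.

Theorem mainTheorem4 (w : seq nat) :
  packed w -> (avoids212 w <-> exists u : ltree, gen_stirling u /\ tword u = w).
Proof.
move=> [m0 Pk]; split.
- move/avoidP => Hav; have [t [[Hwf Hu Hl] Ht]] := build (leqnn _) Hav.
  exists t; split => //; split => //.
  have E : labels t =i iota 1 m0 by move=> x; rewrite Hl Ht Pk.
  have P := uniq_perm Hu (iota_uniq 1 m0) E.
  by rewrite (perm_size P) size_iota.
- case=> u [[Hwf Hp] <-]; apply/avoidP.
  have Hu : uniq (labels u) by rewrite (perm_uniq Hp) iota_uniq.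
  exact: (tree_avoid Hwf Hu).1.
Qed.
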